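(* Let $P$ be a finite poset and $R$ a commutative unital ring. Then $J^3_1(P,R)=[I^3(P,R),I^3(P,R)]$.
   Context: For a finite poset $P$, $P^3_\le=\{(x,y,z)\in P^3: x\le y\le z\}$, and $I^3(P,R)$ is the $R$-module of functions $f:P^3_\le\to R$ with multiplication $(fg)(x_1,x_2,x_3)=\sum f(x_1,y_1,y_2)g(y_1,y_2,x_3)$ over all $x_1\le y_1\le x_2\le y_2\le x_3$. For $a\le b$, $l(a,b)$ is the maximum of $|C|-1$ over chains $C$ in the interval $[a,b]$. $J^3_1(P,R)=\{f: f(x_1,x_2,x_3)=0 \text{ whenever } l(x_1,x_3)<1\}$, i.e. $f$ vanishes on all $(x,x,x)$. $[f,g]=fg-gf$, and for subsets $U,V$, $[U,V]$ is the $R$-submodule spanned by all $[u,v]$, $u\in U$, $v\in V$. *)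

(* Defs.v *)
From HB Require Import structures.
From mathcomp Require Import all_boot all_order all_algebra.
Set Implicit Arguments. Unset Strict Implicit. Unset Printing Implicit Defensive.
Import Order.TTheory GRing.Theory.
Local Open Scope ring_scope.

Section IncidenceAlgebra3.
Variables (disp : Order.disp_t) (P : finPOrderType disp) (R : comPzRingType).

(* Elements of I^3(P,R) are represented as functions P -> P -> P -> R
   that vanish outside P^3_<= = {(x,y,z) | x <= y <= z}. *)
Definition fun3 := P -> P -> P -> R.

Definition in_I3 (f : fun3) : Prop :=
  forall x y z : P, ~~ ((x <= y)%O && (y <= z)%O) -> f x y z = 0.

Definition mul3 (f g : fun3) : fun3 := fun x1 x2 x3 =>
  if (x1 <= x2)%O && (x2 <= x3)%O then
    \sum_(y1 : P) \sum_(y2 : P |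
        [&& (x1 <= y1)%O, (y1 <= x2)%O, (x2 <= y2)%O & (y2 <= x3)%O])
      f x1 y1 y2 * g y1 y2 x3
  else 0.

Definition comm3 (f g : fun3) : fun3 := fun x y z =>
  mul3 f g x y z - mul3 g f x y z.

Definition is_chain_in (a b : P) (C : {set P}) : bool :=
  [forall x in C, forall y in C,
     [&& (a <= x)%O, (x <= b)%O & (x >=< y)%O]].

Definition lchain (a b : P) : nat :=
  \max_(C : {set P} | is_chain_in a b C) (#|C|.-1)%N.

Definition in_J31 (f : fun3) : Prop :=
  forall x1 x2 x3 : P, (x1 <= x2)%O -> (x2 <= x3)%O ->
    (lchain x1 x3 < 1)%N -> f x1 x2 x3 = 0.

Definition in_comm_span (h : fun3) : Prop :=
  exists (n : nat) (r : 'I_n -> R) (u v : 'I_n -> fun3),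
    (forall i, in_I3 (u i) /\ in_I3 (v i)) /\
    (forall x y z : P, h x y z = \sum_(i < n) r i * comm3 (u i) (v i) x y z).

End IncidenceAlgebra3.

(* Main.v *)
Require Import Defs.
From HB Require Import structures.
From mathcomp Require Import all_boot all_order all_algebra.
Set Implicit Arguments. Unset Strict Implicit. Unset Printing Implicit Defensive.
Import Order.TTheory GRing.Theory.
Local Open Scope ring_scope.

Section Aux.
Variables (disp : Order.disp_t) (P : finPOrderType disp) (R : comPzRingType).

Definition el (a b c : P) : fun3 P R := fun x y z =>
  if [&& x == a, y == b, z == c, (a <= b)%O & (b <= c)%O] then 1 else 0.

Lemma el_I3 a b c : in_I3 (el a b c).
Proof.
move=> x y z H; rewrite /el.
case: (x =P a) => [Ex|] //; case: (y =P b) => [Ey|] //; case: (z =P c) => [Ez|] //=.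
subst x y z.
by case: (a <= b)%O H => //=; case: (b <= c)%O.
Qed.

Lemma sum2_pick (C : P -> P -> bool) (b b' : P) (K : R) :
  \sum_(y1 : P) \sum_(y2 : P | C y1 y2) (if (y1 == b) && (y2 == b') then K else 0)
  = if C b b' then K else 0.
Proof.
have -> : \sum_(y1 : P) \sum_(y2 : P | C y1 y2) (if (y1 == b) && (y2 == b') then K else 0)
  = \sum_(y1 : P) (if y1 == b then \sum_(y2 : P | C b y2) (if y2 == b' then K else 0) else 0).
  apply: eq_bigr => y1 _; case: (y1 =P b) => [E|_]; first subst y1.
    by apply: eq_bigr => y2 _.
  by rewrite big1.
rewrite -big_mkcond big_pred1_eq big_mkcond (bigD1 b') //= eqxx big1 ?addr0.
  by case: (C b b').
by move=> y /negbTE ->; case: (C b y).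
Qed.

Lemma mul_el1 a b c x y z :
  mul3 (el a b b) (el b b c) x y z =
  if [&& x == a, y == b, z == c, (a <= b)%O & (b <= c)%O] then 1 else 0.
Proof.
rewrite /mul3.
have Heq : forall y1 y2, el a b b x y1 y2 * el b b c y1 y2 z =
   if (y1 == b) && (y2 == b) then
     (if [&& x == a, z == c, (a <= b)%O & (b <= c)%O] then 1 else 0) else 0.
  move=> y1 y2; rewrite /el.
  case: (y1 =P b) => [E1|]; case: (y2 =P b) => [E2|] /=;
    rewrite ?E1 ?E2 ?eqxx ?lexx ?mul0r ?mulr0 ?andbF //=.
  case: (x == a); case: (z == c); case: (a <= b)%O; case: (b <= c)%O;
    rewrite /= ?mulr1 ?mul1r ?mulr0 ?mul0r //.
under eq_bigr => y1 _ do under eq_bigr => y2 _ do rewrite Heq.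
rewrite sum2_pick.
case: (x =P a) => [Ex|Hx]; last by case: ifP => //; case: ifP.
case: (z =P c) => [Ez|Hz]; last by rewrite !andbF; case: ifP => //; case: ifP.
subst x z => /=.
case Hab: (a <= b)%O; case Hbc: (b <= c)%O; rewrite /= ?andbF ?if_same //.
case: (y =P b) => [Ey|Hy].
  by subst y; rewrite Hab Hbc lexx.
case: ifP => // /andP [Hay Hyc]; case: ifP => // /andP [H2 H3].
by exfalso; apply: Hy; apply/le_anti; rewrite H2 H3.
Qed.

Lemma mul_el2 a b c x y z :
  mul3 (el b b c) (el a b b) x y z =
  if [&& x == a, y == a, z == a, a == b & b == c] then 1 else 0.
Proof.
rewrite /mul3.
have Heq : forall y1 y2, el b b c x y1 y2 * el a b b y1 y2 z =
   if (y1 == b) && (y2 == c) then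
     (if [&& x == b, (b <= c)%O, b == a, c == b, z == b & (a <= b)%O] then 1 else 0) else 0.
  move=> y1 y2; rewrite /el.
  case: (y1 =P b) => [E1|/eqP/negbTE E1]; case: (y2 =P c) => [E2|/eqP/negbTE E2] /=;
    rewrite ?E1 ?E2 ?eqxx ?lexx ?andbF /= ?mul0r ?mulr0 //.
  case: (x == b); case: (z == b); case: (a <= b)%O; case: (b <= c)%O;
    case: (b == a); case: (c == b);
    rewrite /= ?mulr1 ?mul1r ?mulr0 ?mul0r ?andbF //.
under eq_bigr => y1 _ do under eq_bigr => y2 _ do rewrite Heq.
rewrite sum2_pick.
case: (a =P b) => [Eab|/eqP Hab]; last first.
  have Hba : (b == a) = false by rewrite eq_sym; exact: negbTE.
  by rewrite ?(negbTE Hab) Hba /= !andbF /= !if_same.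
case: (b =P c) => [Ebc|/eqP Hbc]; last first.
  have Hcb : (c == b) = false by rewrite eq_sym; exact: negbTE.
  by rewrite ?(negbTE Hbc) Hcb /= !andbF /= !if_same.
subst b c => /=; rewrite lexx /= !andbT.
case: (x =P a) => [Ex|Hx]; last by case: ifP => //; case: ifP.
case: (z =P a) => [Ez|Hz]; last by rewrite !andbF; case: ifP => //; case: ifP.
subst x z => /=.
case: (y =P a) => [Ey|Hy].
  by subst y; rewrite !lexx /= !eqxx.
case: ifP => // /andP [Hay Hyc]; case: ifP => // /andP [H2 H3].
by exfalso; apply: Hy; apply/le_anti; rewrite Hay Hyc.
Qed.

Lemma mul_diag (u v : fun3 P R) x :
  mul3 u v x x x = u x x x * v x x x.
Proof.
rewrite /mul3 lexx /= (eq_bigr (fun y1 => if y1 == x then u x x x * v x x x else 0)).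
  by rewrite -big_mkcond big_pred1_eq.
move=> y1 _; case: (y1 =P x) => [E|Hy].
  subst y1; rewrite (bigD1 x) ?lexx //= big1 ?addr0 // => y2 /andP [/andP [H1 H2] Hy].
  by exfalso; move: Hy; rewrite (@le_anti _ _ x y2) ?H1 ?H2 ?eqxx.
rewrite big1 // => y2 /and4P [H1 H2 _ _].
by exfalso; apply: Hy; apply/le_anti; rewrite H1 H2.
Qed.

Lemma comm_diag (u v : fun3 P R) x : comm3 u v x x x = 0.
Proof. by rewrite /comm3 !mul_diag mulrC subrr. Qed.

Lemma lchain_pos (a b : P) : (a < b)%O -> (1 <= lchain a b)%N.
Proof.
move=> Hab.
have Hc : is_chain_in a b [set a; b].
  apply/forallP => p; apply/implyP => /set2P Hp.
  apply/forallP => q; apply/implyP => /set2P Hq.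
  have Hle := ltW Hab.
  case: Hp => ->; case: Hq => ->; rewrite ?lexx ?Hle /=;
    rewrite /Order.comparable ?lexx ?Hle ?orbT //.
rewrite /lchain.
apply: leq_trans (leq_bigmax_cond _ Hc).
rewrite cards2 (lt_eqF Hab) //.
Qed.

Lemma lchain_diag (a : P) : lchain a a = 0%N.
Proof.
apply/eqP; rewrite -leqn0; apply/bigmax_leqP => C /forallP HC.
rewrite leqn0 -subn1 subn_eq0.
have -> : C = [set x in C | x == a].
  apply/setP => x; rewrite inE; case Hx: (x \in C) => //=.
  have := HC x; rewrite Hx /= => /forallP /(_ x); rewrite Hx /= => /and3P [H1 H2 _].
  by symmetry; apply/eqP/le_anti; rewrite H1 H2.
apply: leq_trans (subset_leq_card (B := [set a]) _) _; last by rewrite cards1.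
by apply/subsetP => x; rewrite !inE => /andP []...
Qed.

End Aux.

Theorem proposition2p4 (disp : Order.disp_t) (P : finPOrderType disp)
  (R : comPzRingType) (f : fun3 P R) :
  in_I3 f -> (in_J31 f <-> in_comm_span f).
Proof.
move=> If; split; last first.
  move=> [n [r [u [v [Huv Hf]]]]] x1 x2 x3 H12 H23 Hl.
  have E13 : x1 = x3.
    apply/eqP; apply/negP => /negP Hne.
    have Hlt : (x1 < x3)%O by rewrite lt_neqAle Hne (le_trans H12 H23).
    by have := lchain_pos Hlt; rewrite leqNgt Hl.
  subst x3.
  have E12 : x2 = x1 by apply/le_anti; rewrite H23 H12.
  subst x2.
  by rewrite Hf big1 // => i _; rewrite comm_diag mulr0.
move=> HJ.
have Hd : forall x : P, f x x x = 0.
  by move=> x; apply: HJ; rewrite ?lexx ?lchain_diag.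
pose T := (P * P * P)%type.
have Hs : forall F : T -> R, \sum_(t : T) F t = \sum_(i < #|(predT : pred T)|) F (enum_val i).
  by move=> F; rewrite -big_enum_val; apply: eq_bigl.
exists #|(predT : pred T)|.
exists (fun i => f (enum_val i).1.1 (enum_val i).1.2 (enum_val i).2).
exists (fun i => el R (enum_val i).1.1 (enum_val i).1.2 (enum_val i).1.2).
exists (fun i => el R (enum_val i).1.2 (enum_val i).1.2 (enum_val i).2).
split; first by move=> i; split; apply: el_I3.
move=> x y z.
rewrite -(Hs (fun t => f t.1.1 t.1.2 t.2 *
   comm3 (el R t.1.1 t.1.2 t.1.2) (el R t.1.2 t.1.2 t.2) x y z)).
rewrite /comm3.
under eq_bigr => t _ do rewrite mul_el1 mul_el2 mulrBr.
rewrite sumrB.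
rewrite [X in _ - X]big1 ?subr0; last first.
  move=> [[a b] c] _ /=; case: ifP; last by rewrite mulr0.
  move=> /and5P [/eqP Ex /eqP Ey /eqP Ez /eqP Eab /eqP Ebc].
  by subst; rewrite Hd mul0r.
rewrite (bigD1 (x, y, z)) //= big1 ?addr0.
  rewrite !eqxx /=; case Hxy: (x <= y)%O; case Hyz: (y <= z)%O;
    rewrite /= ?mulr1 ?mulr0 //; apply: If; rewrite Hxy ?Hyz //.
move=> [[a b] c] /= Hne; case: ifP; last by rewrite mulr0.
move=> /and5P [/eqP Ex /eqP Ey /eqP Ez _ _].
by subst; rewrite eqxx in Hne.
Qed.
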